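(* Let $\mathcal{W}$ be a finite full binary forest. Then every node $x$ of $\mathcal{W}$ is deleted in the pruning procedure during the $r(x)$-th iteration.
   Context: A full binary forest is a finite rooted forest in which every node has $0$ or $2$ children. An ascending path is a sequence of nodes $(x_1,\dots,x_L)$ with $x_{k+1}$ the parent of $x_k$. In a rooted forest (not necessarily full) in which every node has at most 2 children, an only-child-path is an ascending path starting at a leaf and ending at the first encountered node that has a sibling, or at a root (it has length $1$ if the starting leaf has a sibling). Pruning procedure: $\mathcal{W}_{(0)}=\mathcal{W}$; in iteration $i\ge1$, $\mathcal{W}_{(i)}$ is obtained from $\mathcal{W}_{(i-1)}$ by deleting all nodes of all only-child-paths of $\mathcal{W}_{(i-1)}$; stop when the forest is empty. The function $r$ on nodes of $\mathcal{W}$: $r(x)=1$ if $x$ is a leaf; if $x$ has children $y_1,y_2$, $r(x)=r(y_1)+1$ when $r(y_1)=r(y_2)$, and $r(x)=\max\{r(y_1),r(y_2)\}$ otherwise. *)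

(* Defs.v *)
(* A finite rooted forest is encoded by a finite type T of
   nodes together with a parent map par : T -> option T (None = root). *)
From mathcomp Require Import all_boot.
Set Implicit Arguments. Unset Strict Implicit. Unset Printing Implicit Defensive.

Section Forest.
Variables (T : finType) (par : T -> option T).

Definition is_forest : Prop :=
  forall x : T, exists n, iter n (fun o => obind par o) (Some x) = None.

Definition children (x : T) : {set T} := [set y | par y == Some x].

Definition full_binary : Prop :=
  forall x : T, (#|children x| == 0) || (#|children x| == 2).

(* The function r, as an inductive relation following its recursive definition. *)
Inductive rk : T -> nat -> Prop :=
| rk_leaf x : (forall y, par y <> Some x) -> rk x 1
| rk_node x y1 y2 a b : y1 != y2 -> par y1 = Some x -> par y2 = Some x ->
    rk y1 a -> rk y2 b -> rk x (if a == b then a.+1 else maxn a b).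

(* Sub-forests: the forest induced on a set S of nodes (S : T -> Prop). *)
Definition parS (S : T -> Prop) x y := S x /\ S y /\ par x = Some y.
Definition leafS (S : T -> Prop) x := S x /\ forall y, S y -> par y <> Some x.
Definition rootS (S : T -> Prop) x := S x /\ forall y, par x = Some y -> ~ S y.
Definition siblingS (S : T -> Prop) x :=
  exists y, y <> x /\ S y /\ exists p, S p /\ par x = Some p /\ par y = Some p.

Definition ocpath (S : T -> Prop) (s : seq T) : Prop :=
  match s with
  | [::] => False
  | x1 :: _ =>
      leafS S x1 /\
      (forall i, i.+1 < size s ->
         parS S (nth x1 s i) (nth x1 s i.+1) /\ ~ siblingS S (nth x1 s i)) /\
      (siblingS S (last x1 s) \/ rootS S (last x1 s))
  end.

Fixpoint pruned (i : nat) : T -> Prop :=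
  match i with
  | 0 => fun _ => True
  | i'.+1 => fun z => pruned i' z /\ ~ (exists s, ocpath (pruned i') s /\ z \in s)
  end.

Definition deleted_at (x : T) (i : nat) : Prop :=
  0 < i /\ pruned i.-1 x /\ ~ pruned i x.

End Forest.

(* Main.v *)
Require Import Defs.
From mathcomp Require Import all_boot zify.
From Stdlib Require Import Classical ClassicalEpsilon FunctionalExtensionality PropExtensionality.
Set Implicit Arguments. Unset Strict Implicit. Unset Printing Implicit Defensive.

Definition ancf {T : finType} (par : T -> option T) (o : option T) := obind par o.

Lemma ex_dep {T : finType} (par : T -> option T) (hf : is_forest par) (x : T) :
  exists n, (fun n => iter n (ancf par) (Some x) == None) n.
Proof. have [n hn] := hf x. by exists n; apply/eqP. Qed.

Definition dep {T : finType} (par : T -> option T) (hf : is_forest par) (x : T) :=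
  ex_minn (ex_dep hf x).

Lemma dep_par {T : finType} (par : T -> option T) (hf : is_forest par) x y :
  par y = Some x -> dep hf y = (dep hf x).+1.
Proof.
move=> hyx; rewrite /dep.
case: ex_minnP => n /eqP hn hmin.
case: ex_minnP => m /eqP hm hmin'.
have h1 : n <= m.+1.
  apply: hmin; apply/eqP; rewrite iterSr /= /ancf /= hyx; exact hm.
case: n hn hmin h1 => [|n] hn hmin h1; first by [].
have : m <= n by apply: hmin'; apply/eqP; move: hn; rewrite iterSr /= /ancf /= hyx.
lia.
Qed.

Lemma child_ind {T : finType} (par : T -> option T) (hf : is_forest par) (P : T -> Prop) :
  (forall x, (forall y, par y = Some x -> P y) -> P x) -> forall x, P x.
Proof.
move=> H.
set M := \max_(x : T) dep hf x.
suff: forall k x, M - dep hf x <= k -> P x by move=> h x; apply: (h _ x (leqnn _)).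
elim=> [|k IH] x hx; apply: H => y hy; have := dep_par hf hy;
  have : dep hf y <= M by apply: (leq_bigmax y).
- lia.
- move=> h1 h2; apply: IH; lia.
Qed.

Lemma par_ind {T : finType} (par : T -> option T) (hf : is_forest par) (P : T -> Prop) :
  (forall x, (forall y, par x = Some y -> P y) -> P x) -> forall x, P x.
Proof.
move=> H.
suff: forall k x, dep hf x <= k -> P x by move=> h x; apply: (h _ x (leqnn _)).
elim=> [|k IH] x hx; apply: H => y hy; have := dep_par hf hy.
- lia.
- move=> h1; apply: IH; lia.
Qed.

Lemma other_child {T : finType} (par : T -> option T) (hb : full_binary par) c z :
  par c = Some z -> exists c', c' != c /\ par c' = Some z.
Proof.
move=> hc.
have hin : c \in children par z by rewrite inE hc.
have := hb z; case/orP => [/eqP h0|].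
  by have := card0_eq h0 c; rewrite hin inE.
case/cards2P => a [b [hab hA]].
move: hin; rewrite hA !inE => /orP [/eqP ->|/eqP ->].
- exists b; split; first by rewrite eq_sym.
  have : b \in children par z by rewrite hA !inE eqxx orbT.
  by rewrite inE => /eqP.
- exists a; split => //.
  have : a \in children par z by rewrite hA !inE eqxx.
  by rewrite inE => /eqP.
Qed.
Lemma only_two {T : finType} (par : T -> option T) (hb : full_binary par) c c' y z :
  par c = Some z -> par c' = Some z -> c != c' -> par y = Some z -> y = c \/ y = c'.
Proof.
move=> hc hc' hne hy.
have hsub : [set c; c'] \subset children par z.
  by apply/subsetP => w; rewrite !inE => /orP [/eqP ->|/eqP ->]; rewrite ?hc ?hc'.
have hcard : #|children par z| = 2.
  have := hb z; case/orP => /eqP // h0.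
  by have := card0_eq h0 c; rewrite inE hc eqxx.
have heq : [set c; c'] = children par z.
  apply/eqP; rewrite eqEcard hsub /= hcard cards2 hne //.
have : y \in children par z by rewrite inE hy.
by rewrite -heq !inE => /orP [/eqP ->|/eqP ->]; [left|right].
Qed.

Definition comb (a b : nat) := if a == b then a.+1 else maxn a b.

Lemma combC a b : comb a b = comb b a.
Proof. rewrite /comb eq_sym; case: eqP => [->|] //; by rewrite maxnC. Qed.

Lemma rk_uniq {T : finType} (par : T -> option T) (hb : full_binary par) x a :
  rk par x a -> forall b, rk par x b -> a = b.
Proof.
elim=> [z hz|z y1 y2 a1 b1 hne h1 h2 r1 IH1 r2 IH2] b hb'.
- inversion hb' as [|w z1 z2 a' b' hne' h1' h2' s1 s2]; first by [].
  by case: (hz z1).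
- inversion hb' as [w hw|w z1 z2 a' b' hne' h1' h2' s1 s2]; subst.
  + by case: (hw y1).
  have [e1|e1] := only_two hb h1 h2 hne h1'; have [e2|e2] := only_two hb h1 h2 hne h2'; subst.
  * by rewrite eqxx in hne'.
  * by rewrite (IH1 _ s1) (IH2 _ s2).
  * by rewrite (IH1 _ s2) (IH2 _ s1) -/(comb a' b') -/(comb b' a') combC.
  * by rewrite eqxx in hne'.
Qed.

Lemma rk_ex {T : finType} (par : T -> option T) (hf : is_forest par) (hb : full_binary par) x :
  exists k, rk par x k.
Proof.
elim/(child_ind hf): x => x IH.
case: (classic (exists y, par y = Some x)) => [[y hy]|hn].
- have [y' [hne hy']] := other_child hb hy.
  have [a ha] := IH _ hy; have [b hb'] := IH _ hy'.
  eexists; apply: (rk_node hne hy' hy hb' ha).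
- exists 1; apply: rk_leaf => y hy; apply: hn; by exists y.
Qed.

Lemma rk_pos {T : finType} (par : T -> option T) x a : rk par x a -> 0 < a.
Proof. elim=> // z y1 y2 a1 b1 _ _ _ _ h1 _ _; case: eqP => _ //; lia. Qed.

Definition rf {T : finType} (par : T -> option T) (hf : is_forest par) (hb : full_binary par) x :=
  proj1_sig (constructive_indefinite_description _ (rk_ex hf hb x)).

Lemma rf_rk {T : finType} (par : T -> option T) (hf : is_forest par) (hb : full_binary par) x :
  rk par x (rf hf hb x).
Proof. rewrite /rf; by case: constructive_indefinite_description. Qed.

Lemma rf_node {T : finType} (par : T -> option T) (hf : is_forest par) (hb : full_binary par) c c' z :
  par c = Some z -> par c' = Some z -> c != c' -> rf hf hb z = comb (rf hf hb c) (rf hf hb c').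
Proof.
move=> hc hc' hne; symmetry; apply: (rk_uniq hb _ (rf_rk hf hb z)).
exact: (rk_node hne hc hc' (rf_rk hf hb c) (rf_rk hf hb c')).
Qed.

Lemma rf_leaf {T : finType} (par : T -> option T) (hf : is_forest par) (hb : full_binary par) z :
  (forall y, par y <> Some z) -> rf hf hb z = 1.
Proof. move=> h; symmetry; apply: (rk_uniq hb _ (rf_rk hf hb z)); exact: rk_leaf. Qed.

Lemma rf_le {T : finType} (par : T -> option T) (hf : is_forest par) (hb : full_binary par) c z :
  par c = Some z -> rf hf hb c <= rf hf hb z.
Proof.
move=> hc; have [c' [hne hc']] := other_child hb hc.
rewrite (rf_node hf hb hc hc'); last by rewrite eq_sym.
rewrite /comb; case: eqP => _; lia.
Qed.

Definition ppath {T : finType} (par : T -> option T) (S : T -> Prop) x1 (u : seq T) :=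
  leafS par S x1 /\ forall i, i < size u ->
    parS par S (nth x1 (x1::u) i) (nth x1 (x1::u) i.+1) /\ ~ siblingS par S (nth x1 (x1::u) i).

Lemma ocpath_iff {T : finType} (par : T -> option T) S x1 u :
  ocpath par S (x1::u) <-> ppath par S x1 u /\ (siblingS par S (last x1 u) \/ rootS par S (last x1 u)).
Proof.
rewrite /ocpath /ppath /=; split.
- move=> [h1 [h2 h3]]; split => //; split => // i hi; apply: h2; by rewrite ltnS.
- move=> [[h1 h2] h3]; split => //; split => // i hi; apply: h2; by rewrite -ltnS.
Qed.

Lemma ppath_in {T : finType} (par : T -> option T) S x1 u :
  ppath par S x1 u -> forall i, i <= size u -> S (nth x1 (x1::u) i).
Proof.
move=> [hl hp] [|i] hi; first by case: hl.
by have [[_ [? _]] _] := hp i hi.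
Qed.

Lemma ppath_last {T : finType} (par : T -> option T) S x1 u :
  ppath par S x1 u -> S (last x1 u).
Proof.
move=> h; have := ppath_in h (leqnn (size u)).
by have := nth_last x1 (x1 :: u) => /= ->.
Qed.

Lemma ppath_rcons {T : finType} (par : T -> option T) S x1 u p :
  ppath par S x1 u -> parS par S (last x1 u) p -> ~ siblingS par S (last x1 u) ->
  ppath par S x1 (rcons u p).
Proof.
move=> [hl hp] hpar hns; split => // i.
rewrite size_rcons ltnS => hi.
rewrite -rcons_cons !nth_rcons /= ltnS hi.
have hl' : nth x1 (x1 :: u) (size u) = last x1 u by have := nth_last x1 (x1 :: u).
rewrite leq_eqVlt in hi; case/orP: hi => [/eqP ->|hi'].
- by rewrite ltnn eqxx hl'.
- rewrite ltnS hi'; exact: hp.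
Qed.


Lemma leaf_le {T : finType} (par : T -> option T) (hf : is_forest par) (hb : full_binary par) j x :
  0 < j -> leafS par (fun z => j <= rf hf hb z) x -> rf hf hb x <= j.
Proof.
move=> hj [hx hl].
case: (classic (exists y, par y = Some x)) => [[y hy]|hn].
- have [y' [hne hy']] := other_child hb hy.
  rewrite (rf_node hf hb hy hy'); last by rewrite eq_sym.
  have h1 : ~ j <= rf hf hb y by move=> h; exact: (hl y h hy).
  have h2 : ~ j <= rf hf hb y' by move=> h; exact: (hl y' h hy').
  rewrite /comb; case: eqP => _; lia.
- rewrite rf_leaf // => y hy; apply: hn; by exists y.
Qed.

Lemma lemA {T : finType} (par : T -> option T) (hf : is_forest par) (hb : full_binary par) j x1 u :
  0 < j -> ocpath par (fun z => j <= rf hf hb z) (x1::u) ->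
  forall i, i <= size u -> rf hf hb (nth x1 (x1::u) i) = j.
Proof.
move=> hj /ocpath_iff [[hl hp] _].
elim=> [|i IH] hi.
- have := leaf_le hj hl; case: hl => /= h _; lia.
- move: (hp i hi) (IH (ltnW hi)).
  set a := nth x1 (x1 :: u) i; set b := nth x1 (x1 :: u) i.+1.
  move=> [[ha [hb' hab]] hns] hra.
  have [c' [hne hc']] := other_child hb hab.
  have hc'S : ~ j <= rf hf hb c'.
    move=> h; apply: hns; exists c'; split; first by move/eqP: hne.
    split => //; exists b; by [].
  rewrite (rf_node hf hb hab hc'); last by rewrite eq_sym.
  rewrite hra /comb; case: eqP => e; lia.
Qed.

Lemma lemB1 {T : finType} (par : T -> option T) (hf : is_forest par) (hb : full_binary par) j z :
  rf hf hb z = j -> exists x1 u, ppath par (fun z => j <= rf hf hb z) x1 u /\ last x1 u = z.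
Proof.
elim/(child_ind hf): z => z IH hz.
case: (classic (exists c, j <= rf hf hb c /\ par c = Some z)) => [[c [hcS hc]]|hn].
- have [c' [hne hc']] := other_child hb hc.
  have e := rf_node hf hb hc hc'; rewrite eq_sym hne in e; have := e isT.
  have := rf_le hf hb hc.
  rewrite hz /comb => hle; case: eqP => [_|hne2] e2; first by lia.
  have hrc : rf hf hb c = j by lia.
  have hc'S : ~ j <= rf hf hb c' by move=> h; apply: hne2; lia.
  have [x1 [u [hp hlast]]] := IH c hc hrc.
  exists x1, (rcons u z); split; last by rewrite last_rcons.
  apply: ppath_rcons => //; rewrite hlast.
  + split => //; split => //; lia.
  + move=> [y [hyc [hyS [p [hpS [hcp hyp]]]]]].
    rewrite hc in hcp; case: hcp => ep; subst p.
    have hne' : c != c' by rewrite eq_sym.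
    have [e3|e3] := only_two hb hc hc' hne' hyp.
    * by apply: hyc.
    * by subst y.
- exists z, [::]; split => //; split; last by [].
  split; first lia.
  move=> y hy hyz; apply: hn; by exists y.
Qed.

Lemma lemB2 {T : finType} (par : T -> option T) (hf : is_forest par) (S : T -> Prop) w :
  forall x1 u, ppath par S x1 u -> last x1 u = w -> exists v, ocpath par S (x1 :: u ++ v).
Proof.
elim/(par_ind hf): w => w IH x1 u hp hl.
case: (classic (siblingS par S w \/ rootS par S w)) => [h|h].
- exists [::]; rewrite cats0; apply/ocpath_iff; split => //; by rewrite hl.
- have hS : S w by rewrite -hl; exact: ppath_last hp.
  case E: (par w) => [p|]; last first.
    by exfalso; apply: h; right; split => // y; rewrite E.
  case: (classic (S p)) => hpS; last first.
    by exfalso; apply: h; right; split => // y; rewrite E => -[<-].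
  have hp' : ppath par S x1 (rcons u p).
    apply: ppath_rcons => //; rewrite hl //.
    by move=> hs; apply: h; left.
  have [v hv] := IH p E x1 (rcons u p) hp' (last_rcons _ _ _).
  exists (p :: v); by rewrite -cat_rcons.
Qed.

Lemma prunedE {T : finType} (par : T -> option T) (hf : is_forest par) (hb : full_binary par) i :
  pruned par i = fun z => i < rf hf hb z.
Proof.
elim: i => [|i IH].
- apply: functional_extensionality => z; apply: propositional_extensionality; split => // _.
  exact: rk_pos (rf_rk hf hb z).
- rewrite /= IH; apply: functional_extensionality => z; apply: propositional_extensionality.
  split.
  + move=> [hi hno].
    rewrite ltn_neqAle hi andbT; apply/eqP => e.
    apply: hno.
    have [x1 [u [hp hl]]] := lemB1 (esym e).
    have [v hv] := lemB2 hf hp hl.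
    exists (x1 :: u ++ v); split => //.
    by rewrite -cat_cons mem_cat -hl mem_last.
  + move=> hi; split; first lia.
    move=> [[|x1 s] [hs hin]] //.
    have := nth_index x1 hin; have := index_mem z (x1 :: s); rewrite hin => hlt.
    have := lemA (isT : 0 < i.+1) hs (_ : index z (x1::s) <= size s).
    move=> h e; rewrite -e h in hi; last by [].
    by rewrite ltnn in hi.
Qed.

Theorem lemma10 (T : finType) (par : T -> option T) :
  is_forest par -> full_binary par ->
  forall x : T,
    (exists k, rk par x k) /\ (forall k, rk par x k -> deleted_at par x k).
Proof.
move=> hf hb x; split; first exact: rk_ex.
move=> k hk.
have ek := rk_uniq hb hk (rf_rk hf hb x).
have hk0 := rk_pos hk.
rewrite /deleted_at !(prunedE hf hb) -ek; split => //; split; first lia.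
by rewrite ltnn.
Qed.
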